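(* Let $K$ be a field with a non-archimedean absolute value $v$, let $\mathbb{C}_v$ be the completion of an algebraic closure of $K$, and let $\phi(z)\in K[z]$ be a polynomial of degree $d\geq 2$ with lead coefficient $a_d$. Let $\mathfrak{K}_v\subseteq\mathbb{C}_v$ be the filled Julia set of $\phi$ at $v$, let $r_v=\sup\{|x-y|_v : x,y\in\mathfrak{K}_v\}$ be its diameter, and let $U_0\subseteq\mathbb{C}_v$ be the intersection of all disks containing $\mathfrak{K}_v$. Then: (1) $U_0=\bar{D}(x,r_v)$ for any $x\in\mathfrak{K}_v$; (2) there exists $x\in\mathbb{C}_v$ such that $|x|_v=r_v$; (3) $r_v\geq|a_d|_v^{-1/(d-1)}$, with equality if and only if $\mathfrak{K}_v=U_0$; (4) if $r_v>|a_d|_v^{-1/(d-1)}$, let $\alpha\in U_0$ and let $\beta_1,\ldots,\beta_d\in\mathbb{C}_v$ be the roots of $\phi(z)=\alpha$; then $\mathfrak{K}_v\subseteq U_1$, where $U_1=\bigcup_{i=1}^d\bar{D}(\beta_i,|a_d|_v^{-1/(d-1)})$.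
   Context: The filled Julia set of $\phi$ at $v$ is $\mathfrak{K}_v=\{x\in\mathbb{C}_v : \{|\phi^n(x)|_v:n\geq 0\}\text{ is bounded}\}$, where $\phi^n$ is the $n$-th iterate of $\phi$. For $x\in\mathbb{C}_v$ and $r>0$, $\bar{D}(x,r)=\{y\in\mathbb{C}_v:|y-x|_v\leq r\}$ is the closed disk. *)

(* Defs.v *)
From mathcomp Require Import all_boot all_order all_algebra.
From mathcomp Require Import all_classical all_reals all_analysis.
Import Order.TTheory GRing.Theory Num.Theory.
Set Implicit Arguments.
Unset Strict Implicit.
Unset Printing Implicit Defensive.
Local Open Scope ring_scope.
Local Open Scope classical_set_scope.

Definition is_na_abs (R : realType) (L : fieldType) (abs : L -> R) : Prop :=
  (forall x, 0 <= abs x) /\ (forall x, abs x = 0 <-> x = 0) /\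
  (forall x y, abs (x * y) = abs x * abs y) /\
  (forall x y, abs (x + y) <= Num.max (abs x) (abs y)).

Definition abs_complete (R : realType) (L : fieldType) (abs : L -> R) : Prop :=
  forall u : nat -> L,
    (forall e, 0 < e -> exists N, forall m n, (N <= m)%N -> (N <= n)%N ->
        abs (u m - u n) < e) ->
    exists l, forall e, 0 < e -> exists N, forall n, (N <= n)%N -> abs (u n - l) < e.

Definition alg_dense (R : realType) (K : fieldType) (L : fieldType)
  (iota : {rmorphism K -> L}) (abs : L -> R) : Prop :=
  forall x e, 0 < e -> exists y,
    (exists p : {poly K}, p != 0 /\ root (map_poly iota p) y) /\ abs (x - y) < e.

Definition cdisk (R : realType) (L : fieldType) (abs : L -> R) (a : L) (r : R) : set L :=
  [set y | abs (y - a) <= r].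

Definition filled_julia (R : realType) (L : fieldType) (abs : L -> R) (f : {poly L}) : set L :=
  [set x | exists M : R, forall n : nat, abs (iter n (fun z => f.[z]) x) <= M].

Definition diam (R : realType) (L : fieldType) (abs : L -> R) (S : set L) : R :=
  sup [set t | exists x y, S x /\ S y /\ t = abs (x - y)].

Definition disk_hull (R : realType) (L : fieldType) (abs : L -> R) (S : set L) : set L :=
  [set z | forall a r, 0 < r -> S `<=` cdisk abs a r -> cdisk abs a r z].

(* Main.v *)
Require Import Defs.
From mathcomp Require Import all_boot all_order all_algebra.
From mathcomp Require Import all_classical all_reals all_analysis.
From mathcomp Require Import lra.
Import Order.TTheory GRing.Theory Num.Theory.
Local Open Scope ring_scope.
Local Open Scope classical_set_scope.
Set Implicit Arguments.
Unset Strict Implicit.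

Lemma abs_ge0 (R : realType) (L : fieldType) (abs : L -> R) (habs : is_na_abs abs) x :
  0 <= abs x.
Proof. by case: habs => h _; exact: h. Qed.

Lemma abs_eq0 (R : realType) (L : fieldType) (abs : L -> R) (habs : is_na_abs abs) x :
  abs x = 0 <-> x = 0.
Proof. by case: habs => _ [h _]. Qed.

Lemma absM (R : realType) (L : fieldType) (abs : L -> R) (habs : is_na_abs abs) x y :
  abs (x * y) = abs x * abs y.
Proof. by case: habs => _ [_ [h _]]. Qed.

Lemma ultra (R : realType) (L : fieldType) (abs : L -> R) (habs : is_na_abs abs) x y :
  abs (x + y) <= Num.max (abs x) (abs y).
Proof. by case: habs => _ [_ [_ h]]. Qed.

Lemma abs0 (R : realType) (L : fieldType) (abs : L -> R) (habs : is_na_abs abs) :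
  abs 0 = 0.
Proof. exact: (proj2 (abs_eq0 habs 0) erefl). Qed.

Lemma abs_gt0 (R : realType) (L : fieldType) (abs : L -> R) (habs : is_na_abs abs) x :
  x != 0 -> 0 < abs x.
Proof.
move=> hx; rewrite lt_neqAle abs_ge0 // andbT; apply/eqP => h.
by move/eqP: hx; apply; apply: (proj1 (abs_eq0 habs x)).
Qed.

Lemma abs1 (R : realType) (L : fieldType) (abs : L -> R) (habs : is_na_abs abs) :
  abs 1 = 1.
Proof.
have h := absM habs 1 1; rewrite mulr1 in h.
have h0 := abs_gt0 habs (oner_neq0 L).
nra.
Qed.

Lemma absN (R : realType) (L : fieldType) (abs : L -> R) (habs : is_na_abs abs) x :
  abs (- x) = abs x.
Proof.
have h := absM habs (-1) (-1); rewrite mulrNN mulr1 (abs1 habs) in h.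
have h0 := abs_ge0 habs (-1).
have e : abs (-1) = 1 by nra.
by rewrite -mulN1r (absM habs) e mul1r.
Qed.

Lemma absB (R : realType) (L : fieldType) (abs : L -> R) (habs : is_na_abs abs) x y :
  abs (x - y) = abs (y - x).
Proof. by rewrite -opprB (absN habs). Qed.

Lemma ultra_le (R : realType) (L : fieldType) (abs : L -> R) (habs : is_na_abs abs) x y z r :
  abs (x - y) <= r -> abs (y - z) <= r -> abs (x - z) <= r.
Proof.
move=> h1 h2; have := ultra habs (x - y) (y - z).
rewrite addrA subrK => h; apply: (le_trans h).
by rewrite ge_max h1 h2.
Qed.

Lemma abs_add_lt (R : realType) (L : fieldType) (abs : L -> R) (habs : is_na_abs abs) x y :
  abs y < abs x -> abs (x + y) = abs x.
Proof.
move=> h; apply/eqP; rewrite eq_le; apply/andP; split.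
  apply: (le_trans (ultra habs x y)); rewrite ge_max lexx /=; exact: ltW.
have := ultra habs (x + y) (- y); rewrite addrK (absN habs) => h2.
move: h2; rewrite le_max => /orP[//|h3].
by move: (lt_le_trans h h3); rewrite ltxx.
Qed.

Lemma abs_sub_lt (R : realType) (L : fieldType) (abs : L -> R) (habs : is_na_abs abs) x y :
  abs y < abs x -> abs (x - y) = abs x.
Proof. by move=> h; apply: (abs_add_lt habs); rewrite (absN habs). Qed.

Lemma abs_le_add (R : realType) (L : fieldType) (abs : L -> R) (habs : is_na_abs abs) x y :
  abs (x + y) <= abs x + abs y.
Proof.
apply: (le_trans (ultra habs x y)).
have := abs_ge0 habs x; have := abs_ge0 habs y.
rewrite ge_max; move=> h1 h2; apply/andP; split; lra.
Qed.

Lemma absX (R : realType) (L : fieldType) (abs : L -> R) (habs : is_na_abs abs) x n :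
  abs (x ^+ n) = abs x ^+ n.
Proof.
elim: n => [|n IH]; first by rewrite !expr0 (abs1 habs).
by rewrite !exprS (absM habs) IH.
Qed.

Lemma absV (R : realType) (L : fieldType) (abs : L -> R) (habs : is_na_abs abs) x :
  x != 0 -> abs (x^-1) = (abs x)^-1.
Proof.
move=> hx; have h := absM habs x (x^-1); rewrite mulfV // (abs1 habs) in h.
have h0 := abs_gt0 habs hx.
apply: (mulfI (lt0r_neq0 h0)); by rewrite -h mulfV // lt0r_neq0.
Qed.

Lemma abs_prod (R : realType) (L : fieldType) (abs : L -> R) (habs : is_na_abs abs)
  (s : seq L) (F : L -> L) :
  abs (\prod_(b <- s) F b) = \prod_(b <- s) abs (F b).
Proof.
elim: s => [|b s IH]; first by rewrite !big_nil (abs1 habs).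
by rewrite !big_cons (absM habs) IH.
Qed.

Lemma prod_ge0s (R : realType) (L : eqType) (s : seq L) (F : L -> R) :
  (forall b, b \in s -> 0 <= F b) -> 0 <= \prod_(b <- s) F b.
Proof.
elim: s => [|b s IH] h; first by rewrite big_nil.
rewrite big_cons; apply: mulr_ge0; first exact: h (mem_head _ _).
by apply: IH => x hx; apply: h; rewrite in_cons hx orbT.
Qed.

Lemma prod_le (R : realType) (L : eqType) (s : seq L) (F : L -> R) c :
  (forall b, b \in s -> 0 <= F b <= c) -> \prod_(b <- s) F b <= c ^+ size s.
Proof.
elim: s => [|b s IH] h; first by rewrite big_nil expr0.
rewrite big_cons exprS /=.
have /andP[h1 h2] := h b (mem_head _ _).
have hs : forall x, x \in s -> 0 <= F x <= c by move=> x hx; apply: h; rewrite in_cons hx orbT.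
apply: ler_pM => //; last exact: IH.
by apply: prod_ge0s => x /hs /andP[].
Qed.

Lemma prod_ge (R : realType) (L : eqType) (s : seq L) (F : L -> R) c :
  0 <= c -> (forall b, b \in s -> c <= F b) -> c ^+ size s <= \prod_(b <- s) F b.
Proof.
move=> c0; elim: s => [|b s IH] h; first by rewrite big_nil expr0.
rewrite big_cons exprS /=.
have h1 := h b (mem_head _ _).
have hs : forall x, x \in s -> c <= F x by move=> x hx; apply: h; rewrite in_cons hx orbT.
apply: ler_pM => //; [exact: exprn_ge0 | exact: IH].
Qed.

Lemma prod_gt (R : realType) (L : eqType) (s : seq L) (F : L -> R) c :
  0 < c -> s != [::] -> (forall b, b \in s -> c < F b) -> c ^+ size s < \prod_(b <- s) F b.
Proof.
case: s => [//|b s] c0 _ h.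
rewrite big_cons exprS /=.
have h1 := h b (mem_head _ _).
have hs : forall x, x \in s -> c <= F x by move=> x hx; apply: ltW; apply: h; rewrite in_cons hx orbT.
have h2 := prod_ge (ltW c0) hs.
have h3 : 0 < c ^+ size s by apply: exprn_gt0.
have h4 : c * c ^+ size s < F b * c ^+ size s by rewrite ltr_pM2r.
apply: (lt_le_trans h4); apply: ler_pM; [exact: (ltW (lt_trans c0 h1)) | exact: ltW | by [] | exact: h2].
Qed.

Lemma prod_const (R : realType) (L : eqType) (s : seq L) (F : L -> R) c :
  (forall b, b \in s -> F b = c) -> \prod_(b <- s) F b = c ^+ size s.
Proof.
elim: s => [|b s IH] h; first by rewrite big_nil expr0.
rewrite big_cons exprS /= (h b (mem_head _ _)) IH // => x hx.
by apply: h; rewrite in_cons hx orbT.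
Qed.
Lemma poly_fact (L : closedFieldType) (f : {poly L}) d c : (1 <= d)%N -> size f = d.+1 ->
  exists rs : seq L, size rs = d /\
    (forall z, f.[z] - c = lead_coef f * \prod_(b <- rs) (z - b)) /\
    (forall b, b \in rs -> f.[b] = c).
Proof.
move=> hd hsz.
have hs : (size (- c%:P) < size f)%N.
  by rewrite size_polyN hsz ltnS (leq_trans (size_polyC_leq1 _)).
have hlc : lead_coef (f - c%:P) = lead_coef f by rewrite lead_coefDl.
have hsz2 : size (f - c%:P) = d.+1 by rewrite size_polyDl.
have [rs hrs] := closed_field_poly_normal (f - c%:P).
have lc0 : lead_coef f != 0.
  by rewrite lead_coef_eq0 -size_poly_eq0 hsz.
have hev : forall z, f.[z] - c = lead_coef f * \prod_(b <- rs) (z - b).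
  move=> z; have := congr1 (fun p => p.[z]) hrs => /=.
  rewrite hornerZ horner_prod hlc hornerD hornerN hornerC => ->.
  by congr (_ * _); apply: eq_bigr => i _; rewrite hornerXsubC.
exists rs; split; last split => //.
  move: hsz2; rewrite hrs size_scale; last by rewrite hlc.
  by rewrite size_prod_XsubC => -[].
move=> b hb; apply/eqP; rewrite -subr_eq0 hev (big_rem b hb) /= subrr mul0r mulr0 //.
Qed.

Lemma iter_fwd (R : realType) (L : fieldType) (abs : L -> R) (f : {poly L}) x :
  filled_julia abs f x -> filled_julia abs f f.[x].
Proof.
move=> [M hM]; exists M => n; have := hM n.+1; by rewrite iterSr.
Qed.

Lemma iter_bwd (R : realType) (L : fieldType) (abs : L -> R) (f : {poly L}) x :
  filled_julia abs f f.[x] -> filled_julia abs f x.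
Proof.
move=> [M hM]; exists (Num.max M (abs x)) => -[|n] /=.
  by rewrite le_max lexx orbT.
by have := hM n; rewrite -iterSr => h; rewrite le_max h.
Qed.

Lemma seq_argmax (R : realType) (T : eqType) (s : seq T) (F : T -> R) :
  s != [::] -> exists b, b \in s /\ forall b', b' \in s -> F b' <= F b.
Proof.
elim: s => [//|x s IH] _.
case: s IH => [|y s] IH.
  by exists x; split; [rewrite mem_head | move=> b'; rewrite inE => /eqP ->].
have [b [hb hmax]] := IH isT.
case: (leP (F x) (F b)) => h.
  exists b; split; first by rewrite in_cons hb orbT.
  by move=> b'; rewrite in_cons => /orP[/eqP ->//|]; apply: hmax.
exists x; split; first exact: mem_head.
move=> b'; rewrite in_cons => /orP[/eqP ->//|/hmax h2]; exact: (le_trans h2 (ltW h)).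
Qed.

Lemma arith1 (R : realType) (t0 K A B X0 M MM : R) : 0 < t0 -> MM + X0 < K ->
  t0 + K <= A -> A <= B + X0 -> B <= M -> M <= MM -> False.
Proof. move=> *; lra. Qed.

Lemma main_lemma (R : realType) (L : closedFieldType) (abs : L -> R) (habs : is_na_abs abs)
  (f : {poly L}) (d : nat) (hd : (2 <= d)%N) (hsz : size f = d.+1) (rho : R)
  (hrho : 0 < rho) (hrho1 : abs (lead_coef f) * rho ^+ (d - 1) = 1) :
  let KJ := filled_julia abs f in
  let rv := diam abs KJ in
  let U0 := disk_hull abs KJ in
  (forall x, KJ x -> U0 = cdisk abs x rv) /\
  (exists x, abs x = rv) /\
  (rho <= rv /\ (rv = rho <-> KJ = U0)) /\
  (rho < rv -> forall alpha, U0 alpha ->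
     KJ `<=` [set z | exists beta, root (f - alpha%:P) beta /\ abs (z - beta) <= rho]).
Proof.
move=> KJ rv U0.
set a := lead_coef f.
have a0 : a != 0 by rewrite lead_coef_eq0 -size_poly_eq0 hsz.
have ha : 0 < abs a := abs_gt0 habs a0.
have hd1 : (1 <= d)%N by apply: leq_trans hd.
have hdd : d = (d - 1).+1 by rewrite subn1 prednK.
have hd1' : (d - 1 != 0)%N by rewrite subn_eq0 -ltnNge.
have hpow : forall t, abs a * t ^+ d = t * (abs a * t ^+ (d - 1)).
  by move=> t; rewrite {1}hdd exprS mulrCA.
have hgt1 : forall t, rho < t -> 1 < abs a * t ^+ (d - 1).
  by move=> t ht; rewrite -hrho1 ltr_pM2l // ltrXn2r // ltW.
have hmono : forall t1 t2, 0 <= t1 -> t1 <= t2 -> abs a * t1 ^+ (d - 1) <= abs a * t2 ^+ (d - 1).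
  move=> t1 t2 h1 h2; rewrite ler_pM2l //; apply: lerXn2r => //; rewrite nnegrE //.
  exact: le_trans h2.
have [x0 hx0] : exists x0, f.[x0] = x0.
  have : size (f - 'X) != 1%N.
    have hX : (size (- 'X : {poly L}) < size f)%N by rewrite size_polyN size_polyX hsz ltnS.
    by rewrite size_polyDl // hsz eqSS -lt0n.
  case/closed_rootP => x /rootP; rewrite hornerD hornerN hornerX => /eqP.
  by rewrite subr_eq0 => /eqP h; exists x.
pose F := fun z => f.[z].
have KJx0 : KJ x0.
  exists (abs x0) => n; suff -> : iter n F x0 = x0 by [].
  by elim: n => //= n ->; exact: hx0.
have [gs [hgs [hgev hgroot]]] := poly_fact x0 hd1 hsz.
have gsn : gs != [::] by apply/eqP => e; move: hgs; rewrite e /= => h; move: hd1; rewrite -h.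
have [g0 [g0in hg0]] := seq_argmax (fun g => abs (g - x0)) gsn.
set m := abs (g0 - x0).
have m0 : 0 <= m := abs_ge0 habs _.
have grow : forall z, m < abs (z - x0) -> abs (f.[z] - x0) = abs a * abs (z - x0) ^+ d.
  move=> z hz; rewrite hgev (absM habs) (abs_prod habs) (@prod_const _ _ _ _ (abs (z - x0))) ?hgs //.
  move=> g hg; have e : z - g = (z - x0) - (g - x0) by rewrite opprB addrA subrK.
  rewrite e (abs_sub_lt habs) //; exact: le_lt_trans (hg0 g hg) hz.
have escape : forall z, Num.max m rho < abs (z - x0) -> ~ KJ z.
  move=> z; rewrite gt_max => /andP[ht0m ht0r] [M hM].
  set t0 := abs (z - x0) in ht0m ht0r.
  set c := abs a * t0 ^+ (d - 1).
  have hc : 1 < c := hgt1 _ ht0r.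
  have t00 : 0 < t0 := lt_trans hrho ht0r.
  have key : forall n, t0 + n%:R * ((c - 1) * t0) <= abs (iter n F z - x0).
    elim => [|n IH]; first by rewrite /= mul0r addr0.
    rewrite iterS; set u := iter n F z in IH *.
    have hnn : 0 <= n%:R * ((c - 1) * t0).
      by apply: mulr_ge0; [exact: ler0n | apply: mulr_ge0; lra].
    have htu : t0 <= abs (u - x0) by lra.
    rewrite /F grow; last exact: lt_le_trans ht0m htu.
    rewrite hpow.
    have hA := hmono _ _ (ltW t00) htu.
    rewrite -/c in hA.
    have h1 : 0 <= abs (u - x0) * (abs a * abs (u - x0) ^+ (d - 1) - c).
      by apply: mulr_ge0; [exact: abs_ge0 | rewrite subr_ge0].
    rewrite -natr1 mulrDl mul1r.
    nra.
  have hX : 0 <= (`|M| + abs x0) / ((c - 1) * t0).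
    apply: divr_ge0; first by apply: addr_ge0; [exact: normr_ge0 | exact: abs_ge0].
    apply: mulr_ge0; lra.
  have hn := archi_boundP hX.
  set N := Num.Def.archi_bound _ in hn.
  rewrite ltr_pdivrMr in hn; last by apply: mulr_gt0; lra.
  have k1 := key N.
  have k2 : abs (iter N F z - x0) <= abs (iter N F z) + abs x0.
    by apply: (le_trans (abs_le_add habs _ _)); rewrite (absN habs).
  have k3 : abs (iter N F z) <= M := hM N.
  have k4 : M <= `|M| := ler_norm M.
  exact: (arith1 t00 hn k1 k2 k3 k4).
have KJsub : forall z, KJ z -> abs (z - x0) <= Num.max m rho.
  by move=> z hz; rewrite leNgt; apply/negP => h; exact: escape z h hz.
set R0 := Num.max m rho in escape KJsub.
have R0m : m <= R0 by rewrite le_max lexx.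
have R0r : rho <= R0 by rewrite le_max lexx orbT.
have R0pos : 0 < R0 := lt_le_trans hrho R0r.
have diskKJ : m <= rho -> forall z, abs (z - x0) <= rho -> KJ z.
  move=> hmr z hz.
  have inv : forall z, abs (z - x0) <= rho -> abs (f.[z] - x0) <= rho.
    move=> y hy; rewrite hgev (absM habs) (abs_prod habs).
    apply: (@le_trans _ _ (abs a * rho ^+ size gs)).
      rewrite ler_pM2l //; apply: prod_le => g hg; rewrite (abs_ge0 habs) /=.
      apply: (ultra_le habs hy); rewrite (absB habs); exact: le_trans (hg0 g hg) hmr.
    by rewrite hgs hpow hrho1 mulr1.
  exists (rho + abs x0) => n.
  have hi : abs (iter n F z - x0) <= rho.
    by elim: n => [//|n IH]; rewrite iterS; apply: inv.
  have := abs_le_add habs (iter n F z - x0) x0; rewrite subrK => h; lra.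
have [y0 [KJy0 hy0]] : exists y0, KJ y0 /\ abs (y0 - x0) = R0.
  case: (leP m rho) => hmr.
    have eR : R0 = rho by rewrite /R0 max_r.
    have : size ('X^(d - 1) - (a^-1)%:P) != 1%N by rewrite size_XnsubC // lt0n.
    case/closed_rootP => w /rootP; rewrite hornerD hornerN hornerXn hornerC => /eqP.
    rewrite subr_eq0 => /eqP hw.
    have haw : abs w = rho.
      have e1 : abs w ^+ (d - 1) = rho ^+ (d - 1).
        rewrite -(absX habs) hw (absV habs a0).
        apply: (mulfI (lt0r_neq0 ha)); by rewrite mulfV ?lt0r_neq0.
      by apply/eqP; rewrite -(eqrXn2 (n := d - 1)) ?lt0n ?e1 // ?(abs_ge0 habs) // ltW.
    have e2 : abs (x0 + w - x0) = rho by rewrite addrC addKr haw.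
    exists (x0 + w); split; last by rewrite e2.
    by apply: diskKJ => //; rewrite e2.
  have eR : R0 = m by rewrite /R0 max_l // ltW.
  exists g0; split => //; apply: iter_bwd; rewrite hgroot //.
have hrv : rv = R0.
  rewrite /rv /diam.
  set S := [set t | exists x y, KJ x /\ KJ y /\ t = abs (x - y)].
  have ub : ubound S R0.
    move=> t [x [y [hx [hy ->]]]]; apply: (ultra_le habs (KJsub x hx)).
    by rewrite (absB habs); exact: KJsub.
  have inS : S R0 by exists y0, x0; split => //; split => //; rewrite hy0.
  apply/eqP; rewrite eq_le; apply/andP; split.
    by apply: ge_sup => //; exists R0.
  by apply: sup_upper_bound => //; split; [exists R0 | exists R0].
have hU0 : forall x, KJ x -> U0 = cdisk abs x rv.
  move=> x hx; rewrite hrv; apply/seteqP; split => z.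
    move=> hz; apply: hz => // y hy; rewrite /cdisk /=.
    apply: (ultra_le habs (KJsub y hy)); rewrite (absB habs); exact: KJsub.
  rewrite /cdisk /= => hz b r hr hsub.
  have hxb := hsub x hx; have hy0b := hsub y0 KJy0; have hx0b := hsub x0 KJx0.
  rewrite /cdisk /= in hxb hy0b hx0b.
  have hRr : R0 <= r by rewrite -hy0; apply: (ultra_le habs hy0b); rewrite (absB habs).
  rewrite /cdisk /=; apply: (ultra_le habs _ hxb); exact: le_trans hz hRr.
split; first exact: hU0.
split; first by exists (y0 - x0); rewrite hy0 hrv.
split.
  split; first by rewrite hrv.
  case: (leP m rho) => hmr.
    have eR : R0 = rho by rewrite /R0 max_r.
    split => _; first last.
      by rewrite hrv.
    rewrite (hU0 x0 KJx0) hrv eR; apply/seteqP; split => z.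
      by rewrite /cdisk /= => hz; rewrite -eR; exact: KJsub.
    by rewrite /cdisk /=; exact: diskKJ.
  have eR : R0 = m by rewrite /R0 max_l // ltW.
  split => h.
    by move: hmr; rewrite -eR -hrv h ltxx.
  exfalso.
  have [rs [hrs [hrev hrroot]]] := poly_fact (x0 + a * (g0 - x0) ^+ d) hd1 hsz.
  have rsn : rs != [::] by apply/eqP => e; move: hrs; rewrite e /= => h'; move: hd1; rewrite -h'.
  case: rs rsn hrs hrev hrroot => [//|z rs] _ _ _ hrroot.
  have hz : f.[z] = x0 + a * (g0 - x0) ^+ d by apply: hrroot; exact: mem_head.
  have hfz : abs (f.[z] - x0) = abs a * m ^+ d by rewrite hz addrC addKr (absM habs) (absX habs).
  have hm1 : m < abs a * m ^+ d.
    by rewrite hpow -{1}(mulr1 m) ltr_pM2l ?hgt1 //; exact: lt_trans hmr.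
  have hzx : abs (z - x0) <= m.
    rewrite leNgt; apply/negP => hlt.
    move: hfz; rewrite grow // => e.
    have : abs a * m ^+ d < abs a * abs (z - x0) ^+ d.
      by rewrite ltr_pM2l // ltrXn2r // -lt0n; apply: leq_trans hd.
    by rewrite e ltxx.
  have hU : U0 z by rewrite (hU0 x0 KJx0) hrv eR.
  rewrite -h in hU.
  have := KJsub _ (iter_fwd hU); rewrite -/R0 eR hfz => h2.
  by move: (lt_le_trans hm1 h2); rewrite ltxx.
move=> hlt alpha halpha z hz.
have hmr : rho < m.
  rewrite ltNge; apply/negP => hmr.
  by move: hlt; rewrite hrv /R0 max_r // ltxx.
have eR : R0 = m by rewrite /R0 max_l // ltW.
have hm1 : m < abs a * m ^+ d.
  by rewrite hpow -{1}(mulr1 m) ltr_pM2l ?hgt1 //; exact: lt_trans hmr.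
have hal : abs (alpha - x0) <= m.
  by move: halpha; rewrite (hU0 x0 KJx0) hrv eR.
have [bs [hbs [hbev hbroot]]] := poly_fact alpha hd1 hsz.
have KJsubm : forall y, KJ y -> abs (y - x0) <= m by move=> y /KJsub; rewrite eR.
case: (boolP (has (fun b => abs (z - b) <= rho) bs)) => [/hasP[b hb hzb]|/hasPn hall].
  exists b; split => //; apply/rootP.
  by rewrite hornerD hornerN hornerC hbroot // subrr.
exfalso.
have hall' : forall b, b \in bs -> rho < abs (z - b).
  by move=> b /hall; rewrite -ltNge.
have hfzm : forall y, KJ y -> abs (f.[y] - alpha) <= m.
  move=> y hy; apply: (ultra_le habs (KJsubm _ (iter_fwd hy))).
  by rewrite (absB habs).
have hbm : forall b, b \in bs -> abs (b - x0) <= m.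
  move=> b hb; rewrite leNgt; apply/negP => hlt2.
  have e := grow b hlt2; rewrite hbroot // hpow in e.
  have h1 := hgt1 _ (lt_trans hmr hlt2).
  have : abs (b - x0) < abs (alpha - x0).
    by rewrite e -{1}(mulr1 (abs (b - x0))) ltr_pM2l //; exact: lt_trans (lt_le_trans hrho (ltW hmr)) hlt2.
  move=> h2; have := lt_le_trans (lt_trans hlt2 h2) hal; by rewrite ltxx.
have hle : forall y b, KJ y -> b \in bs -> abs (y - b) <= m.
  move=> y b hy hb; apply: (ultra_le habs (KJsubm _ hy)); rewrite (absB habs); exact: hbm.
have [y [KJy hzy]] : exists y, KJ y /\ abs (z - y) = m.
  case: (boolP (abs (z - x0) == m)) => [/eqP e|ne].
    by exists x0.
  have hlt3 : abs (z - x0) < m by rewrite lt_neqAle ne KJsubm.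
  exists g0; split.
    by apply: iter_bwd; rewrite hgroot.
  have e : z - g0 = - ((g0 - x0) - (z - x0)) by rewrite opprB opprB addrA subrK.
  by rewrite e (absN habs) (abs_sub_lt habs).
case: (boolP (has (fun b => abs (z - b) == m) bs)) => [/hasP[b1 hb1 /eqP e1]|/hasPn hn].
  have := hfzm z hz; rewrite hbev (absM habs) (abs_prod habs) (big_rem b1 hb1) /= e1.
  have hrem : rem b1 bs != [::].
    apply/eqP => e; have := size_rem hb1; rewrite e hbs /= => h'.
    by move: hd; rewrite -subn1 in h'; move/eqP: h'; rewrite eq_sym subn_eq0 => h''; move=> hd'; move: (leq_trans hd' h'').
  have hP := @prod_gt _ _ (rem b1 bs) (fun b => abs (z - b)) rho hrho hrem.
  have hP' : rho ^+ size (rem b1 bs) < \prod_(b <- rem b1 bs) abs (z - b).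
    by apply: hP => b hb; apply: hall'; exact: mem_rem hb.
  rewrite size_rem // hbs -subn1 in hP'.
  have : m < abs a * (m * \prod_(b <- rem b1 bs) abs (z - b)).
    rewrite mulrCA -{1}(mulr1 m) ltr_pM2l; last exact: lt_trans hmr.
    by rewrite -[X in X < _]hrho1 ltr_pM2l.
  move=> h1 h2; have := lt_le_trans h1 h2; by rewrite ltxx.
have hyb : forall b, b \in bs -> abs (y - b) = m.
  move=> b hb; apply/eqP; rewrite eq_le hle //=.
  have hzb : abs (z - b) < m by rewrite lt_neqAle hn // hle.
  have := ultra habs (z - b) (b - y); rewrite addrA subrK hzy le_max => /orP[h|h].
    by move: (le_lt_trans h hzb); rewrite ltxx.
  by rewrite (absB habs).
have := hfzm y KJy; rewrite hbev (absM habs) (abs_prod habs) (prod_const hyb) hbs => h.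
by move: (lt_le_trans hm1 h); rewrite ltxx.
Qed.

Unset Implicit Arguments.
Theorem lemma3p4 (R : realType) (K : fieldType) (L : closedFieldType)
  (iota : {rmorphism K -> L}) (abs : L -> R)
  (habs : is_na_abs abs) (hcomp : abs_complete abs) (hdense : alg_dense iota abs)
  (phi : {poly K}) (d : nat) (hd : (2 <= d)%N) (hsz : size phi = d.+1) :
  let phiL := map_poly iota phi in
  let KJ := filled_julia abs phiL in
  let rv := diam abs KJ in
  let U0 := disk_hull abs KJ in
  let rho := abs (iota (lead_coef phi)) `^ (- ((d - 1)%:R)^-1) in
  (forall x, KJ x -> U0 = cdisk abs x rv) /\
  (exists x, abs x = rv) /\
  (rho <= rv /\ (rv = rho <-> KJ = U0)) /\
  (rho < rv -> forall alpha, U0 alpha ->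
     KJ `<=` [set z | exists beta, root (phiL - alpha%:P) beta /\ abs (z - beta) <= rho]).
Proof.
move=> phiL KJ rv U0 rho.
have hsz' : size phiL = d.+1 by rewrite size_map_poly.
have hlc : lead_coef phiL = iota (lead_coef phi) by rewrite lead_coef_map.
have lc0 : lead_coef phi != 0 by rewrite lead_coef_eq0 -size_poly_eq0 hsz.
have A0 : 0 < abs (iota (lead_coef phi)) by apply: (abs_gt0 habs); rewrite fmorph_eq0.
have hrho : 0 < rho := powR_gt0 _ A0.
have hn0 : ((d - 1)%:R : R) != 0 by rewrite pnatr_eq0 subn_eq0 -ltnNge.
have hrho1 : abs (lead_coef phiL) * rho ^+ (d - 1) = 1.
  rewrite hlc /rho -powR_mulrn; last exact: ltW (powR_gt0 _ A0).
  rewrite -powRrM mulNr mulVf // powR_inv1; last exact: ltW.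
  by rewrite mulfV // lt0r_neq0.
exact: (main_lemma habs hd hsz' hrho hrho1).
Qed.
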